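(* Let $\varrho\in C^2(\mathbb{C};\mathbb{C})$ be neither holomorphic, nor antiholomorphic, nor $\mathbb{R}$-affine. Let $K\subseteq\mathbb{C}$ be compact and $\varepsilon>0$. Then there are $\mathbb{C}$-affine maps $\phi:\mathbb{C}\to\mathbb{C}^2$ and $\psi:\mathbb{C}^2\to\mathbb{C}^2$ such that $\sup_{z\in K}\|(\psi\circ\varrho^{\times2}\circ\phi)(z)-(z,\overline{z})\|_{\mathbb{C}^2}<\varepsilon$.
   Context: $\varrho$ is antiholomorphic if $\overline{\varrho}$ is holomorphic; $\varrho$ is $\mathbb{R}$-affine if it is affine as a map $\mathbb{R}^2\to\mathbb{R}^2$ under $\mathbb{C}\cong\mathbb{R}^2$. A map $\mathbb{C}^a\to\mathbb{C}^b$ is $\mathbb{C}$-affine if it has the form $z\mapsto Az+b$ with complex $A,b$. $\varrho^{\times2}(z_1,z_2)=(\varrho(z_1),\varrho(z_2))$. *)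

(* Defs.v *)
From Stdlib Require Import Reals List.
From Coquelicot Require Import Coquelicot.
Open Scope R_scope.

Definition reP (f : C -> C) (x y : R) : R := fst (f (x, y)).
Definition imP (f : C -> C) (x y : R) : R := snd (f (x, y)).

Definition C2_real (g : R -> R -> R) : Prop :=
  exists g1 g2 g11 g12 g21 g22 : R -> R -> R,
    (forall x y, is_derive (fun t => g t y) x (g1 x y)) /\
    (forall x y, is_derive (fun t => g x t) y (g2 x y)) /\
    (forall x y, is_derive (fun t => g1 t y) x (g11 x y)) /\
    (forall x y, is_derive (fun t => g1 x t) y (g12 x y)) /\
    (forall x y, is_derive (fun t => g2 t y) x (g21 x y)) /\
    (forall x y, is_derive (fun t => g2 x t) y (g22 x y)) /\
    (forall h, In h (g :: g1 :: g2 :: g11 :: g12 :: g21 :: g22 :: nil) ->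
       forall p : R * R, continuous (fun q : R * R => h (fst q) (snd q)) p).

Definition C2_CC (f : C -> C) : Prop := C2_real (reP f) /\ C2_real (imP f).

Definition holomorphic (f : C -> C) : Prop :=
  forall z : C, ex_derive (K := C_AbsRing) (V := C_NormedModule) f z.

Definition antiholomorphic (f : C -> C) : Prop :=
  holomorphic (fun z => Cconj (f z)).

Definition R_affine (f : C -> C) : Prop :=
  exists m11 m12 m21 m22 b1 b2 : R, forall x y : R,
    f (x, y) = (m11 * x + m12 * y + b1, m21 * x + m22 * y + b2).

Definition compactC (K : C -> Prop) : Prop :=
  forall (I : Type) (U : I -> C -> Prop),
    (forall i, open (U i)) ->
    (forall z, K z -> exists i, U i z) ->
    exists l : list I, forall z, K z -> exists i, In i l /\ U i z.

Definition normC2 (w : C * C) : R :=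
  sqrt (Cmod (fst w) ^ 2 + Cmod (snd w) ^ 2).

Definition times2 (f : C -> C) (w : C * C) : C * C := (f (fst w), f (snd w)).

Definition C_affine_1_2 (phi : C -> C * C) : Prop :=
  exists a1 a2 b1 b2 : C, forall z : C,
    phi z = (Cplus (Cmult a1 z) b1, Cplus (Cmult a2 z) b2).

Definition C_affine_2_2 (psi : C * C -> C * C) : Prop :=
  exists a11 a12 a21 a22 c1 c2 : C, forall w : C * C,
    psi w = (Cplus (Cplus (Cmult a11 (fst w)) (Cmult a12 (snd w))) c1,
             Cplus (Cplus (Cmult a21 (fst w)) (Cmult a22 (snd w))) c2).

Definition subC2 (u v : C * C) : C * C :=
  (Cminus (fst u) (fst v), Cminus (snd u) (snd v)).

(* Main.v *)
Require Import Defs.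
From Stdlib Require Import Reals Lra Lia List Classical.
From Coquelicot Require Import Coquelicot.
Open Scope R_scope.

Definition D2 (g : R -> R -> R) x y l1 l2 := forall e, 0 < e -> exists d, 0 < d /\
  forall s t, Rabs s < d -> Rabs t < d ->
  Rabs (g (x+s) (y+t) - g x y - (l1*s + l2*t)) <= e * (Rabs s + Rabs t).

Lemma cont2 (h : R -> R -> R) x y :
  continuous (fun q : R * R => h (fst q) (snd q)) (x, y) ->
  forall e, 0 < e -> exists d, 0 < d /\ forall u v, Rabs (u - x) < d -> Rabs (v - y) < d ->
   Rabs (h u v - h x y) < e.
Proof.
  intros Hc e He.
  apply continuity_2d_pt_filterlim in Hc.
  destruct (Hc (mkposreal e He)) as [d Hd].
  exists d; split; [apply cond_pos|]. intros; apply Hd; auto.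
Qed.

Lemma mvt1 (f df : R -> R) a b :
  (forall x, is_derive f x (df x)) ->
  exists c, Rabs (c - a) <= Rabs (b - a) /\ f b - f a = df c * (b - a).
Proof.
  intros Hd.
  destruct (MVT_gen f a b df) as [c [Hc1 Hc2]].
  - intros; apply Hd.
  - intros x _. apply continuity_pt_filterlim.
    apply (ex_derive_continuous (K:=R_AbsRing) (V:=R_NormedModule) f x). eexists; apply Hd.
  - exists c; split; auto.
    unfold Rmin, Rmax in Hc1; destruct (Rle_dec a b);
    unfold Rabs; repeat destruct Rcase_abs; lra.
Qed.

Lemma d2_of_C2 g : C2_real g -> exists g1 g2, forall x y, D2 g x y (g1 x y) (g2 x y).
Proof.
  intros [g1 [g2 [g11 [g12 [g21 [g22 [H1 [H2 [_ [_ [_ [_ Hc]]]]]]]]]]]].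
  exists g1, g2. intros x y e He.
  assert (C1 := Hc g1 ltac:(simpl; auto) (x, y)).
  assert (C2 := Hc g2 ltac:(simpl; auto) (x, y)).
  destruct (cont2 _ _ _ C1 e He) as [d1 [Hd1 P1]].
  destruct (cont2 _ _ _ C2 e He) as [d2 [Hd2 P2]].
  exists (Rmin d1 d2); split; [apply Rmin_glb_lt; auto|].
  intros s t Hs Ht.
  assert (Hs1 : Rabs s < d1) by (eapply Rlt_le_trans; [apply Hs| apply Rmin_l]).
  assert (Ht1 : Rabs t < d1) by (eapply Rlt_le_trans; [apply Ht| apply Rmin_l]).
  assert (Ht2 : Rabs t < d2) by (eapply Rlt_le_trans; [apply Ht| apply Rmin_r]).
  destruct (mvt1 (fun u => g u (y+t)) (fun u => g1 u (y+t)) x (x+s)) as [c [Hc1 Hc2]].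
  { intros; apply H1. }
  destruct (mvt1 (fun v => g x v) (fun v => g2 x v) y (y+t)) as [c' [Hc1' Hc2']].
  { intros; apply H2. }
  replace (x + s - x) with s in * by ring.
  replace (y + t - y) with t in * by ring.
  simpl in Hc2, Hc2'.
  assert (E1 : Rabs (g1 c (y+t) - g1 x y) < e).
  { apply P1; [lra| replace (y+t-y) with t by ring; auto]. }
  assert (E2 : Rabs (g2 x c' - g2 x y) < e).
  { apply P2; [replace (x-x) with 0 by ring; rewrite Rabs_R0; auto| lra]. }
  replace (g (x + s) (y + t) - g x y - (g1 x y * s + g2 x y * t)) with
    ((g1 c (y+t) - g1 x y) * s + (g2 x c' - g2 x y) * t) by lra.
  eapply Rle_trans; [apply Rabs_triang|].
  rewrite !Rabs_mult.
  assert (0 <= Rabs s) by apply Rabs_pos. assert (0 <= Rabs t) by apply Rabs_pos.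
  nra.
Qed.

Lemma Cmod_le_sum (a b : R) : Cmod (a, b) <= Rabs a + Rabs b.
Proof.
  unfold Cmod; simpl.
  rewrite <- (sqrt_pow2 (Rabs a + Rabs b)) by (pose proof (Rabs_pos a); pose proof (Rabs_pos b); lra).
  apply sqrt_le_1_alt.
  assert (Ea : a * a = Rabs a * Rabs a) by (rewrite <- Rabs_mult; rewrite Rabs_right; nra).
  assert (Eb : b * b = Rabs b * Rabs b) by (rewrite <- Rabs_mult; rewrite Rabs_right; nra).
  pose proof (Rabs_pos a); pose proof (Rabs_pos b). nra.
Qed.

Lemma abs_le_Cmod (a b : R) : Rabs a <= Cmod (a, b) /\ Rabs b <= Cmod (a,b).
Proof.
  pose proof (Rmax_Cmod (a,b)). simpl in H. split; eapply Rle_trans; try apply H.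
  apply Rmax_l. apply Rmax_r.
Qed.

Lemma holo_of (f : C -> C) (P1 P2 Q1 Q2 : R -> R -> R) :
  (forall x y, D2 (reP f) x y (P1 x y) (P2 x y)) ->
  (forall x y, D2 (imP f) x y (Q1 x y) (Q2 x y)) ->
  (forall x y, Q1 x y = - P2 x y /\ Q2 x y = P1 x y) -> holomorphic f.
Proof.
  intros HP HQ CR [x y].
  exists (P1 x y, Q1 x y). split; [apply is_linear_scal_l|].
  intros z0 Hz0. apply (is_filter_lim_locally_unique (K:=C_AbsRing) (V:=AbsRing_NormedModule C_AbsRing)) in Hz0. subst z0.
  intros eps.
  assert (He : 0 < eps / 4) by (pose proof (cond_pos eps); lra).
  destruct (HP x y _ He) as [d1 [Hd1 D1]].
  destruct (HQ x y _ He) as [d2 [Hd2 D2']].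
  assert (Hd : 0 < Rmin d1 d2) by (apply Rmin_glb_lt; auto).
  exists (mkposreal _ Hd). intros [u v] B. change (Cmod ((u,v) - (x,y))%C < Rmin d1 d2) in B.
  unfold Cminus, Cplus, Copp in B; simpl in B.
  pose proof (abs_le_Cmod (u + - x) (v + - y)) as [A1 A2].
  set (s := u + - x) in *. set (t := v + - y) in *.
  assert (Bu : Rabs s < Rmin d1 d2) by lra.
  assert (Bv : Rabs t < Rmin d1 d2) by lra.
  assert (Hs1 : Rabs s < d1) by (eapply Rlt_le_trans; [apply Bu| apply Rmin_l]).
  assert (Ht1 : Rabs t < d1) by (eapply Rlt_le_trans; [apply Bv| apply Rmin_l]).
  assert (Hs2 : Rabs s < d2) by (eapply Rlt_le_trans; [apply Bu| apply Rmin_r]).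
  assert (Ht2 : Rabs t < d2) by (eapply Rlt_le_trans; [apply Bv| apply Rmin_r]).
  specialize (D1 s t Hs1 Ht1). specialize (D2' s t Hs2 Ht2).
  replace (x + s) with u in * by (unfold s; ring).
  replace (y + t) with v in * by (unfold t; ring).
  unfold reP, imP in *. destruct (CR x y) as [E1 E2].
  change (norm ?z) with (Cmod z).
  unfold minus, plus, opp, scal; simpl.
  unfold mult; simpl.
  destruct (f (u, v)) as [fu1 fu2] eqn:Ef. destruct (f (x, y)) as [fx1 fx2] eqn:Ef2.
  simpl in D1, D2'.
  rewrite E1, E2 in *.
  eapply Rle_trans; [apply Cmod_le_sum|].
  unfold Cplus, Copp, Cmult; simpl. fold s t.
  replace (fu1 + - fx1 + - (s * P1 x y - t * - P2 x y)) with (fu1 - fx1 - (P1 x y * s + P2 x y * t)) by ring.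
  replace (fu2 + - fx2 + - (s * - P2 x y + t * P1 x y)) with (fu2 - fx2 - (- P2 x y * s + P1 x y * t)) by ring.
  pose proof (cond_pos eps).
  assert (eps/4*(Rabs s + Rabs t) <= eps/2 * Cmod (s,t)) by nra. lra.
Qed.

Definition wa (P1 P2 Q1 Q2 : R) : C := ((P1+Q2)/2, (Q1-P2)/2).
Definition wb (P1 P2 Q1 Q2 : R) : C := ((P1-Q2)/2, (Q1+P2)/2).

Lemma approx (rho : C -> C) x y P1 P2 Q1 Q2 :
  D2 (reP rho) x y P1 P2 -> D2 (imP rho) x y Q1 Q2 ->
  forall e, 0 < e -> exists d, 0 < d /\ forall u, Cmod u < d ->
   Cmod (rho (Cplus u (x,y)) - rho (x,y) - (wa P1 P2 Q1 Q2 * u + wb P1 P2 Q1 Q2 * Cconj u))%C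
     <= e * Cmod u.
Proof.
  intros HP HQ e He.
  assert (He4 : 0 < e/4) by lra.
  destruct (HP _ He4) as [d1 [Hd1 D1]].
  destruct (HQ _ He4) as [d2 [Hd2 D2']].
  exists (Rmin d1 d2); split; [apply Rmin_glb_lt; auto|].
  intros [s t] B.
  pose proof (abs_le_Cmod s t) as [A1 A2].
  assert (Hs1 : Rabs s < d1) by (pose proof (Rmin_l d1 d2); lra).
  assert (Ht1 : Rabs t < d1) by (pose proof (Rmin_l d1 d2); lra).
  assert (Hs2 : Rabs s < d2) by (pose proof (Rmin_r d1 d2); lra).
  assert (Ht2 : Rabs t < d2) by (pose proof (Rmin_r d1 d2); lra).
  specialize (D1 s t Hs1 Ht1). specialize (D2' s t Hs2 Ht2).
  unfold reP, imP in D1, D2'.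
  replace (Cplus (s,t) (x,y)) with (x+s, y+t) by (unfold Cplus; simpl; f_equal; ring).
  destruct (rho (x+s, y+t)) as [f1 f2]. destruct (rho (x, y)) as [g1 g2].
  simpl in D1, D2'.
  unfold wa, wb, Cminus, Cplus, Copp, Cmult, Cconj; simpl.
  eapply Rle_trans; [apply Cmod_le_sum|].
  replace (f1 + - g1 + - ((P1 + Q2) / 2 * s - (Q1 - P2) / 2 * t + ((P1 - Q2) / 2 * s - (Q1 + P2) / 2 * - t)))
   with (f1 - g1 - (P1 * s + P2 * t)) by field.
  replace (f2 + - g2 + - ((P1 + Q2) / 2 * t + (Q1 - P2) / 2 * s + ((P1 - Q2) / 2 * - t + (Q1 + P2) / 2 * s)))
   with (f2 - g2 - (Q1 * s + Q2 * t)) by field.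
  assert (e/4*(Rabs s + Rabs t) <= e/2 * Cmod (s,t)) by nra. lra.
Qed.

Lemma D2_opp g x y l1 l2 : D2 g x y l1 l2 -> D2 (fun a b => - g a b) x y (-l1) (-l2).
Proof.
  intros H e He. destruct (H e He) as [d [Hd H']]. exists d; split; auto.
  intros s t Hs Ht. specialize (H' s t Hs Ht).
  replace (- g (x + s) (y + t) - - g x y - (- l1 * s + - l2 * t)) with
    (- (g (x + s) (y + t) - g x y - (l1 * s + l2 * t))) by ring.
  rewrite Rabs_Ropp; auto.
Qed.

Lemma points (rho : C -> C) : C2_CC rho -> ~ holomorphic rho -> ~ antiholomorphic rho ->
  exists P1 P2 Q1 Q2 : R -> R -> R,
   (forall x y, D2 (reP rho) x y (P1 x y) (P2 x y)) /\
   (forall x y, D2 (imP rho) x y (Q1 x y) (Q2 x y)) /\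
   (exists x y, wa (P1 x y) (P2 x y) (Q1 x y) (Q2 x y) <> 0%C) /\
   (exists x y, wb (P1 x y) (P2 x y) (Q1 x y) (Q2 x y) <> 0%C).
Proof.
  intros [HP HQ] Hh Ha.
  destruct (d2_of_C2 _ HP) as [P1 [P2 DP]].
  destruct (d2_of_C2 _ HQ) as [Q1 [Q2 DQ]].
  exists P1, P2, Q1, Q2. split; [auto|split; [auto|split]].
  - apply NNPP; intro N. apply Ha.
    apply (holo_of _ P1 P2 (fun x y => - Q1 x y) (fun x y => - Q2 x y)).
    + exact DP.
    + intros x y. exact (D2_opp _ _ _ _ _ (DQ x y)).
    + intros x y. destruct (classic (wa (P1 x y) (P2 x y) (Q1 x y) (Q2 x y) = 0%C)) as [E|E].
      * unfold wa in E. injection E; intros. split; lra.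
      * exfalso; apply N; eauto.
  - apply NNPP; intro N. apply Hh.
    apply (holo_of _ P1 P2 Q1 Q2); auto.
    intros x y. destruct (classic (wb (P1 x y) (P2 x y) (Q1 x y) (Q2 x y) = 0%C)) as [E|E].
      * unfold wb in E. injection E; intros. split; lra.
      * exfalso; apply N; eauto.
Qed.

Lemma bounded K : compactC K -> exists N, 0 < N /\ forall z, K z -> Cmod z <= N.
Proof.
  intros HK.
  destruct (HK nat (fun n z => Cmod z < INR n)) as [l Hl].
  - intros n z Hz.
    assert (He : 0 < (INR n - Cmod z)/2) by lra.
    exists (mkposreal _ He). intros [w1 w2] [B1 B2]. simpl in B1, B2.
    unfold AbsRing_ball, abs, minus, plus, opp in B1, B2; simpl in B1, B2.
    destruct z as [z1 z2]. simpl in *.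
    pose proof (Cmod_triangle (z1,z2) (w1 + - z1, w2 + - z2)) as T.
    unfold Cplus in T; simpl in T.
    replace (z1 + (w1 + - z1)) with w1 in T by ring.
    replace (z2 + (w2 + - z2)) with w2 in T by ring.
    pose proof (Cmod_le_sum (w1 + - z1) (w2 + - z2)). change (Rabs (w1 + - z1) < (INR n - Cmod (z1, z2)) / 2) in B1. change (Rabs (w2 + - z2) < (INR n - Cmod (z1, z2)) / 2) in B2. lra.
  - intros z _. destruct (INR_unbounded (Cmod z)) as [n Hn]. exists n; auto.
  - exists (INR (fold_right Nat.add 0%nat l) + 1). split.
    + pose proof (pos_INR (fold_right Nat.add 0%nat l)); lra.
    + intros z Hz. destruct (Hl z Hz) as [i [Hi Hz']].
      assert (Hle : (i <= fold_right Nat.add 0 l)%nat).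
      { clear -Hi. induction l as [|a l IH]; simpl in *; [contradiction|].
        destruct Hi as [->|Hi]; [lia| specialize (IH Hi); lia]. }
      apply le_INR in Hle. lra.
Qed.

Lemma normC2_le (w : C * C) : normC2 w <= Cmod (fst w) + Cmod (snd w).
Proof.
  change (normC2 w) with (Cmod (Cmod (fst w), Cmod (snd w))).
  eapply Rle_trans; [apply Cmod_le_sum|].
  rewrite !Rabs_right; try apply Rle_ge, Cmod_ge_0; lra.
Qed.

Lemma conj_R (h : R) : Cconj (RtoC h) = RtoC h.
Proof. unfold Cconj, RtoC; simpl; f_equal; ring. Qed.

Lemma RtoC_neq0 (h : R) : h <> 0 -> RtoC h <> 0%C.
Proof. intros H E. apply H. unfold RtoC in E. injection E; auto. Qed.

Lemma core (rho : C -> C) (K : C -> Prop) (eps : R) (z1 z2 a1 b1 a2 b2 al1 al2 : C) :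
  Cmod al1 = 1 -> Cmod al2 = 1 ->
  (a1 * al1 * (b2 * Cconj al2) - b1 * Cconj al1 * (a2 * al2))%C <> 0%C ->
  (forall e, 0 < e -> exists d, 0 < d /\ forall u, Cmod u < d ->
     Cmod (rho (Cplus u z1) - rho z1 - (a1 * u + b1 * Cconj u))%C <= e * Cmod u) ->
  (forall e, 0 < e -> exists d, 0 < d /\ forall u, Cmod u < d ->
     Cmod (rho (Cplus u z2) - rho z2 - (a2 * u + b2 * Cconj u))%C <= e * Cmod u) ->
  compactC K -> 0 < eps ->
  exists (phi : C -> C * C) (psi : C * C -> C * C),
    C_affine_1_2 phi /\ C_affine_2_2 psi /\
    exists delta : R, delta < eps /\
      forall z : C, K z ->
        normC2 (subC2 (psi (times2 rho (phi z))) (z, Cconj z)) <= delta.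
Proof.
  intros Hal1 Hal2 HD Ap1 Ap2 HK Heps.
  set (p1 := (a1 * al1)%C). set (q1 := (b1 * Cconj al1)%C).
  set (p2 := (a2 * al2)%C). set (q2 := (b2 * Cconj al2)%C).
  set (Dt := (p1 * q2 - q1 * p2)%C).
  assert (HDt : Dt <> 0%C) by exact HD.
  set (m11 := (q2 / Dt)%C). set (m12 := (- q1 / Dt)%C).
  set (m21 := (- p2 / Dt)%C). set (m22 := (p1 / Dt)%C).
  destruct (bounded K HK) as [N [HN HKN]].
  set (S := Cmod m11 + Cmod m12 + Cmod m21 + Cmod m22 + 1).
  assert (HS : 0 < S) by (unfold S; pose proof (Cmod_ge_0 m11); pose proof (Cmod_ge_0 m12);
     pose proof (Cmod_ge_0 m21); pose proof (Cmod_ge_0 m22); lra).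
  set (e := eps / (4 * S * N)).
  assert (He : 0 < e) by (unfold e; apply Rdiv_lt_0_compat; [lra| apply Rmult_lt_0_compat; lra]).
  destruct (Ap1 e He) as [d1 [Hd1 A1]].
  destruct (Ap2 e He) as [d2 [Hd2 A2]].
  set (h := Rmin d1 d2 / (2 * N)).
  assert (Hh : 0 < h) by (unfold h; apply Rdiv_lt_0_compat; [apply Rmin_glb_lt; auto| lra]).
  assert (HhN : h * N < d1 /\ h * N < d2).
  { unfold h. replace (Rmin d1 d2 / (2 * N) * N) with (Rmin d1 d2 / 2) by (field; lra).
    pose proof (Rmin_l d1 d2); pose proof (Rmin_r d1 d2); pose proof (Rmin_glb_lt d1 d2 0 Hd1 Hd2). lra. }
  assert (Hh0 : RtoC h <> 0%C) by (apply RtoC_neq0; lra).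
  exists (fun z => (Cplus (Cmult (RtoC h * al1) z) z1, Cplus (Cmult (RtoC h * al2) z) z2)).
  exists (fun w => (Cplus (Cplus (Cmult (m11 / RtoC h) (fst w)) (Cmult (m12 / RtoC h) (snd w)))
                      (- (m11 * rho z1 + m12 * rho z2) / RtoC h),
                    Cplus (Cplus (Cmult (m21 / RtoC h) (fst w)) (Cmult (m22 / RtoC h) (snd w)))
                      (- (m21 * rho z1 + m22 * rho z2) / RtoC h))%C).
  split; [do 4 eexists; intros; reflexivity|].
  split; [do 6 eexists; intros; reflexivity|].
  exists (eps / 2); split; [lra|].
  intros z Hz. specialize (HKN z Hz).
  set (u1 := (RtoC h * al1 * z)%C). set (u2 := (RtoC h * al2 * z)%C).
  assert (Hu1 : Cmod u1 = h * Cmod z) by (unfold u1; rewrite !Cmod_mult, Hal1, Cmod_R, Rabs_right; lra).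
  assert (Hu2 : Cmod u2 = h * Cmod z) by (unfold u2; rewrite !Cmod_mult, Hal2, Cmod_R, Rabs_right; lra).
  assert (HhZ : h * Cmod z <= h * N) by (apply Rmult_le_compat_l; lra).
  assert (B1 := A1 u1 ltac:(lra)). assert (B2 := A2 u2 ltac:(lra)).
  set (r1 := (rho (Cplus u1 z1) - rho z1 - (a1 * u1 + b1 * Cconj u1))%C) in B1.
  set (r2 := (rho (Cplus u2 z2) - rho z2 - (a2 * u2 + b2 * Cconj u2))%C) in B2.
  assert (Hc1 : Cconj u1 = (RtoC h * Cconj al1 * Cconj z)%C) by (unfold u1; rewrite !Cmult_conj, conj_R; auto).
  assert (Hc2 : Cconj u2 = (RtoC h * Cconj al2 * Cconj z)%C) by (unfold u2; rewrite !Cmult_conj, conj_R; auto).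
  assert (R1 : rho (Cplus u1 z1) = (r1 + rho z1 + (a1*u1 + b1 * Cconj u1))%C) by (unfold r1; ring).
  assert (R2 : rho (Cplus u2 z2) = (r2 + rho z2 + (a2*u2 + b2 * Cconj u2))%C) by (unfold r2; ring).
  cbn [fst snd subC2 times2]. fold u1 u2. rewrite R1, R2, Hc1, Hc2.
  clearbody r1 r2. unfold u1, u2, subC2. cbn [fst snd].
  match goal with |- normC2 (?A, ?B) <= _ =>
    assert (EA : A = ((m11 * r1 + m12 * r2) / RtoC h)%C);
    [| assert (EB : B = ((m21 * r1 + m22 * r2) / RtoC h)%C)] end.
  { unfold m11, m12, Dt, p1, q1, p2, q2. field. split; auto. }
  { unfold m21, m22, Dt, p1, q1, p2, q2. field. split; auto. }
  rewrite EA, EB.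
  eapply Rle_trans; [apply normC2_le|]. cbn [fst snd].
  rewrite !Cmod_div by auto. rewrite Cmod_R, Rabs_right by lra.
  rewrite Hu1 in B1. rewrite Hu2 in B2.
  assert (G : forall m n : C, Cmod (m * r1 + n * r2) <= (Cmod m + Cmod n) * (e * (h * N))).
  { intros m n. eapply Rle_trans; [apply Cmod_triangle|]. rewrite !Cmod_mult.
    pose proof (Cmod_ge_0 m); pose proof (Cmod_ge_0 n).
    assert (e * (h * Cmod z) <= e * (h * N)) by (apply Rmult_le_compat_l; lra).
    nra. }
  pose proof (G m11 m12) as G1. pose proof (G m21 m22) as G2.
  assert (SeN : S * e * N = eps / 4) by (unfold e; field; lra).
  unfold Rdiv.
  apply Rle_trans with ((Cmod m11 + Cmod m12 + (Cmod m21 + Cmod m22)) * (e * (h * N)) * / h).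
  { rewrite Rmult_plus_distr_r, Rmult_plus_distr_r. apply Rplus_le_compat;
    apply Rmult_le_compat_r; try lra; left; apply Rinv_0_lt_compat; lra. }
  replace ((Cmod m11 + Cmod m12 + (Cmod m21 + Cmod m22)) * (e * (h * N)) * / h)
    with ((S - 1) * e * N) by (unfold S; field; lra).
  nra.
Qed.

Lemma Cminus_eq0 (a b : C) : (a - b)%C = 0%C -> a = b.
Proof. intros H. replace a with ((a - b) + b)%C by ring. rewrite H. ring. Qed.

Theorem proposition5p2 (rho : C -> C) (K : C -> Prop) (eps : R) :
  C2_CC rho ->
  ~ holomorphic rho -> ~ antiholomorphic rho -> ~ R_affine rho ->
  compactC K -> 0 < eps ->
  exists (phi : C -> C * C) (psi : C * C -> C * C),
    C_affine_1_2 phi /\ C_affine_2_2 psi /\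
    (* sup_{z in K} || ... || < eps *)
    exists delta : R, delta < eps /\
      forall z : C, K z ->
        normC2 (subC2 (psi (times2 rho (phi z))) (z, Cconj z)) <= delta.
Proof.
  intros HC Hh Ha _ HK Heps.
  destruct (points rho HC Hh Ha) as [P1 [P2 [Q1 [Q2 [DP [DQ [[x1 [y1 Ha1]] [x2 [y2 Hb2]]]]]]]]].
  set (a1 := wa (P1 x1 y1) (P2 x1 y1) (Q1 x1 y1) (Q2 x1 y1)) in *.
  set (b1 := wb (P1 x1 y1) (P2 x1 y1) (Q1 x1 y1) (Q2 x1 y1)).
  set (a2 := wa (P1 x2 y2) (P2 x2 y2) (Q1 x2 y2) (Q2 x2 y2)).
  set (b2 := wb (P1 x2 y2) (P2 x2 y2) (Q1 x2 y2) (Q2 x2 y2)) in *.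
  assert (Ap1 := approx rho x1 y1 _ _ _ _ (DP x1 y1) (DQ x1 y1)).
  assert (Ap2 := approx rho x2 y2 _ _ _ _ (DP x2 y2) (DQ x2 y2)).
  fold a1 b1 in Ap1. fold a2 b2 in Ap2.
  assert (C1 : Cmod (RtoC 1) = 1) by (rewrite Cmod_R; apply Rabs_R1).
  assert (cj1 : Cconj (RtoC 1) = RtoC 1) by apply conj_R.
  destruct (classic ((a1 * b2)%C = (b1 * a2)%C)) as [E|E].
  - apply (core rho K eps (x1,y1) (x2,y2) a1 b1 a2 b2 (RtoC 1) Ci C1 Cmod_Ci); auto.
    assert (cji : Cconj Ci = (- Ci)%C) by (unfold Cconj, Ci, Copp; simpl; f_equal; ring).
    rewrite cj1, cji.
    replace (a1 * RtoC 1 * (b2 * - Ci) - b1 * RtoC 1 * (a2 * Ci))%C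
      with ((- Ci * RtoC 2) * (a1 * b2))%C.
    + apply Cmult_neq_0; [apply Cmult_neq_0|apply Cmult_neq_0; auto].
      * intro H. assert (H' := f_equal Cmod H). rewrite Cmod_opp, Cmod_Ci, Cmod_0 in H'. lra.
      * apply RtoC_neq0; lra.
    + replace (b1 * RtoC 1 * (a2 * Ci))%C with (Ci * (b1*a2))%C by ring. rewrite <- E. ring.
  - apply (core rho K eps (x1,y1) (x2,y2) a1 b1 a2 b2 (RtoC 1) (RtoC 1) C1 C1); auto.
    rewrite cj1. intro H. apply E. apply Cminus_eq0. rewrite <- H. ring.
Qed.
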